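(* Let $E$ be a directed graph and let $(H,S)$ be a reflexive admissible pair of $E$. Then $E$ is all-reflexive if and only if the quotient graph $E/(H,S)$ and the porcupine graph $P_{(H,S)}$ are both all-reflexive. The statement continues to hold if ''all-reflexive'' is replaced everywhere by ''strongly all-reflexive''.
   Context: $E$ is an arbitrary directed graph with vertex set $E^0$, edge set $E^1$, source map $\mathbf{s}$ and range map $\mathbf{r}$. For a set of vertices $V$, the root of $V$ is $R(V)=\{u\in E^0\mid u\geq v \text{ for some } v\in V\}$, where $u\geq v$ means there is a path from $u$ to $v$. A set $H\subseteq E^0$ is hereditary if the range of every path with source in $H$ is in $H$, and saturated if every regular vertex (neither a sink nor an infinite emitter) $v$ with $\mathbf{r}(\mathbf{s}^{-1}(v))\subseteq H$ lies in $H$. For $H$ hereditary and saturated, the set of breaking vertices is $B_H=\{v\in E^0-H\mid v$ is an infinite emitter and $\mathbf{s}^{-1}(v)\cap\mathbf{r}^{-1}(E^0-H)$ is nonempty and finite$\}$. An admissible pair is $(H,S)$ with $H$ hereditary and saturated and $S\subseteq B_H$. Define $H^\bot=E^0-R(H)$ and $S^\bot=B_{H^\bot}-S$; then $(H^\bot,S^\bot)$ is an admissible pair, and $(H,S)$ is called reflexive if $(H,S)=(H^{\bot\bot},S^{\bot\bot})$ (equivalently, $R(H)-H\subseteq R(H^\bot)$ and $S=B_H$). The quotient graph $E/(H,S)$ has vertices $(E^0-H)\cup\{v'\mid v\in B_H-S\}$ and edges $\{e\in E^1\mid \mathbf{r}(e)\notin H\}\cup\{e'\mid e\in E^1,\ \mathbf{r}(e)\in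 B_H-S\}$, with $\mathbf{s},\mathbf{r}$ as in $E$ on the old edges and $\mathbf{s}(e')=\mathbf{s}(e)$, $\mathbf{r}(e')=\mathbf{r}(e)'$. The porcupine graph $P_{(H,S)}$: let $F_1(H,S)$ be the set of paths $e_1\ldots e_n$ of $E$ with $\mathbf{r}(e_n)\in H$ and $\mathbf{s}(e_n)\notin H\cup S$, and $F_2(H,S)$ the set of paths $p$ of positive length with $\mathbf{r}(p)\in S$. For each edge $e\in F_1(H,S)\cup F_2(H,S)$ add a new vertex $w^e$ and a new edge $f^e$ with $\mathbf{s}(f^e)=w^e$, $\mathbf{r}(f^e)=\mathbf{r}(e)$; inductively, for each path $p=eq$ in $F_1(H,S)\cup F_2(H,S)$ with $|q|\geq 1$ add a new vertex $w^p$ and a new edge $f^p$ with $\mathbf{s}(f^p)=w^p$, $\mathbf{r}(f^p)=w^q$. The vertices of $P_{(H,S)}$ are $H\cup S\cup\{w^p\mid p\in F_1(H,S)\cup F_2(H,S)\}$, and its edges are $\{e\in E^1\mid \mathbf{s}(e)\in H\}\cup\{e\in E^1\mid \mathbf{s}(e)\in S,\ \mathbf{r}(e)\in H\}\cup\{f^p\mid p\in F_1(H,S)\cup F_2(H,S)\}$, with $\mathbf{s},\mathbf{r}$ as in $E$ on common edges. A cycle is a closed path whose distinct edges have distinct sources; an exit of a cycle is an edge not on the cycle whose source is on the cycle. A cycle $c$ is extreme if it has exits and for every path $p$ with $\mathbf{s}(p)$ on $c$ there is a path $q$ from $\mathbf{r}(p)$ to a vertex of $c$. A graph is all-reflexive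 if (a) each cycle is either without exits or extreme, (b) each infinite emitter lies on a cycle, and (c) for each infinite path $\alpha$ with vertex set $\alpha^0$, only finitely many edges $e$ with $\mathbf{s}(e)\in\alpha^0$ satisfy $\mathbf{r}(e)\notin R(\alpha^0)$. (Equivalently, every admissible pair of the graph is reflexive.) A graph is strongly all-reflexive if it is all-reflexive and has no cycles without exits. *)

(* Defs.v *)
From Stdlib Require Import List.
Import ListNotations.

Record graph : Type := Graph {
  V : Type;
  Ed : Type;
  src : Ed -> V;
  rng : Ed -> V }.

Arguments src {g} _.
Arguments rng {g} _.

Definition finite (T : Type) (P : T -> Prop) : Prop :=
  exists l : list T, forall x, P x -> In x l.
Arguments finite {T} P.

Section Basic.
Variable G : graph.

Definition infinite_emitter (v : V G) : Prop := ~ finite (fun e : Ed G => src e = v).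
Definition sink (v : V G) : Prop := forall e : Ed G, src e <> v.
Definition regular (v : V G) : Prop := ~ sink v /\ ~ infinite_emitter v.

Fixpoint chain (l : list (Ed G)) : Prop :=
  match l with
  | [] => True
  | e :: l' => match l' with
               | [] => True
               | f :: _ => rng e = src f /\ chain l'
               end
  end.

Fixpoint lastE (e : Ed G) (q : list (Ed G)) : Ed G :=
  match q with [] => e | f :: q' => lastE f q' end.

Definition geq (u v : V G) : Prop :=
  u = v \/ exists (e : Ed G) (p : list (Ed G)),
             chain (e :: p) /\ src e = u /\ rng (lastE e p) = v.

Definition root (W : V G -> Prop) : V G -> Prop :=
  fun u => exists v, W v /\ geq u v.

Definition hereditary (H : V G -> Prop) : Prop :=
  forall u v, H u -> geq u v -> H v.

Definition saturated (H : V G -> Prop) : Prop :=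
  forall v, regular v -> (forall e : Ed G, src e = v -> H (rng e)) -> H v.

Definition breaking (H : V G -> Prop) (v : V G) : Prop :=
  ~ H v /\ infinite_emitter v /\
  (exists e : Ed G, src e = v /\ ~ H (rng e)) /\
  finite (fun e : Ed G => src e = v /\ ~ H (rng e)).

Definition admissible (H S : V G -> Prop) : Prop :=
  hereditary H /\ saturated H /\ (forall v, S v -> breaking H v).

Definition perpH (H : V G -> Prop) : V G -> Prop := fun v => ~ root H v.
Definition perpS (H S : V G -> Prop) : V G -> Prop :=
  fun v => breaking (perpH H) v /\ ~ S v.

(** (H,S) = (H^{bot bot}, S^{bot bot}) *)
Definition reflexive (H S : V G -> Prop) : Prop :=
  (forall v, H v <-> perpH (perpH H) v) /\
  (forall v, S v <-> perpS (perpH H) (perpS H S) v).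

Definition cycle (c : list (Ed G)) : Prop :=
  exists e p, c = e :: p /\ chain c /\ rng (lastE e p) = src e /\ NoDup (map (@src G) c).

Definition on_cycle (c : list (Ed G)) (v : V G) : Prop :=
  exists e, In e c /\ src e = v.

Definition exit (c : list (Ed G)) (f : Ed G) : Prop :=
  ~ In f c /\ on_cycle c (src f).

Definition has_exit (c : list (Ed G)) : Prop := exists f, exit c f.

Definition extreme (c : list (Ed G)) : Prop :=
  has_exit c /\
  forall e p, chain (e :: p) -> on_cycle c (src e) ->
    exists w, on_cycle c w /\ geq (rng (lastE e p)) w.

Definition inf_path (a : nat -> Ed G) : Prop :=
  forall n, rng (a n) = src (a (S n)).

Definition inf_path_vertices (a : nat -> Ed G) : V G -> Prop :=
  fun v => exists n, src (a n) = v.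

Definition all_reflexive : Prop :=
  (forall c, cycle c -> ~ has_exit c \/ extreme c) /\
  (forall v, infinite_emitter v -> exists c, cycle c /\ on_cycle c v) /\
  (forall a, inf_path a ->
     finite (fun e : Ed G => inf_path_vertices a (src e) /\
                             ~ root (inf_path_vertices a) (rng e))).

Definition strongly_all_reflexive : Prop :=
  all_reflexive /\ (forall c, cycle c -> has_exit c).

Lemma admissible_hereditary (H S : V G -> Prop) :
  admissible H S -> hereditary H.
Proof. intros [h _]; exact h. Qed.

Lemma hered_edge (H : V G -> Prop) (e : Ed G) :
  hereditary H -> H (src e) -> H (rng e).
Proof.
  intros hH hs. apply (hH _ _ hs). right. exists e, []. simpl. auto.
Qed.

Lemma hered_src_notin (H : V G -> Prop) (e : Ed G) :
  hereditary H -> ~ H (rng e) -> ~ H (src e).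
Proof. intros hH hr hs. apply hr. now apply hered_edge. Qed.

End Basic.

Arguments chain {G} _.
Arguments lastE {G} _ _.

Section Quotient.
Variables (G : graph) (H S : V G -> Prop) (hH : hereditary G H).

Definition QV : Type :=
  ({v : V G | ~ H v} + {v : V G | breaking G H v /\ ~ S v})%type.
Definition QE : Type :=
  ({e : Ed G | ~ H (rng e)} + {e : Ed G | breaking G H (rng e) /\ ~ S (rng e)})%type.

Definition qsrc (x : QE) : QV :=
  match x with
  | inl (exist _ e h) => inl (exist _ (src e) (@hered_src_notin G H e hH h))
  | inr (exist _ e h) => inl (exist _ (src e) (@hered_src_notin G H e hH (proj1 (proj1 h))))
  end.

Definition qrng (x : QE) : QV :=
  match x with
  | inl (exist _ e h) => inl (exist _ (rng e) h)
  | inr (exist _ e h) => inr (exist _ (rng e) h)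
  end.

Definition quotient_graph : graph := @Graph QV QE qsrc qrng.
End Quotient.

Section Porcupine.
Variables (G : graph) (H S : V G -> Prop) (hH : hereditary G H).

Definition F1 (p : list (Ed G)) : Prop :=
  exists e q, p = e :: q /\ chain p /\ H (rng (lastE e q)) /\
              ~ (H (src (lastE e q)) \/ S (src (lastE e q))).
Definition F2 (p : list (Ed G)) : Prop :=
  exists e q, p = e :: q /\ chain p /\ S (rng (lastE e q)).

Definition pv_ok (x : V G + list (Ed G)) : Prop :=
  match x with inl v => H v \/ S v | inr p => F1 p \/ F2 p end.
Definition pe_ok (y : Ed G + list (Ed G)) : Prop :=
  match y with
  | inl e => H (src e) \/ (S (src e) /\ H (rng e))
  | inr p => F1 p \/ F2 p
  end.

(** vertices: H ∪ S ∪ {w^p | p ∈ F1 ∪ F2}  (w^p encoded as inr p) *)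
Definition PV : Type := {x : V G + list (Ed G) | pv_ok x}.
(** edges: old edges (inl e) and f^p (encoded as inr p) *)
Definition PE : Type := {y : Ed G + list (Ed G) | pe_ok y}.

Definition psrc_raw (y : Ed G + list (Ed G)) : V G + list (Ed G) :=
  match y with inl e => inl (src e) | inr p => inr p end.

(** r(f^e) = r(e);  r(f^{eq}) = w^q  for |q| >= 1 *)
Definition prng_raw (y : Ed G + list (Ed G)) : V G + list (Ed G) :=
  match y with
  | inl e => inl (rng e)
  | inr p => match p with
             | [] => inr []
             | e :: q => match q with [] => inl (rng e) | _ => inr q end
             end
  end.

Lemma psrc_ok y : pe_ok y -> pv_ok (psrc_raw y).
Proof.
  destruct y as [e|p]; simpl; auto.
  intros [h|[h _]]; auto.
Qed.

Lemma prng_ok y : pe_ok y -> pv_ok (prng_raw y).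
Proof.
  destruct y as [e|p]; simpl.
  - intros [h|[_ h]]; left; auto. now apply hered_edge.
  - destruct p as [|e q].
    + intros [(e&q&E&_)|(e&q&E&_)]; discriminate.
    + destruct q as [|f q'].
      * intros [(e0&q0&E&_&h&_)|(e0&q0&E&_&h)]; injection E; intros; subst; simpl in *; auto.
      * intros [(e0&q0&E&ch&h1&h2)|(e0&q0&E&ch&h)]; injection E; intros; subst.
        -- left. exists f, q'. simpl in ch. split; [reflexivity|]. split; [apply ch|].
           simpl in h1, h2. auto.
        -- right. exists f, q'. simpl in ch. split; [reflexivity|]. split; [apply ch|].
           simpl in h. auto.
Qed.

Definition psrc (y : PE) : PV := exist _ (psrc_raw (proj1_sig y)) (@psrc_ok (proj1_sig y) (proj2_sig y)).
Definition prng (y : PE) : PV := exist _ (prng_raw (proj1_sig y)) (@prng_ok (proj1_sig y) (proj2_sig y)).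

Definition porcupine_graph : graph := @Graph PV PE psrc prng.
End Porcupine.

(* Main.v *)
Require Import Defs.
From Stdlib Require Import List FinFun Classical ClassicalEpsilon ProofIrrelevance Lia Arith.
Import ListNotations.

Lemma fin_sub {T} (P Q : T -> Prop) : finite P -> (forall x, Q x -> P x) -> finite Q.
Proof. intros [l hl] h. exists l. intros x hx. apply hl, h, hx. Qed.

Lemma fin_union {T} (P Q : T -> Prop) : finite P -> finite Q -> finite (fun x => P x \/ Q x).
Proof.
  intros [l1 h1] [l2 h2]. exists (l1 ++ l2). intros x [hx|hx]; apply in_or_app; auto.
Qed.

Lemma fin_rel {A B} (R : A -> B -> Prop) (P : B -> Prop) (Q : A -> Prop) :
  (forall a a' b, R a b -> R a' b -> a = a') ->
  finite P -> (forall a, Q a -> exists b, R a b /\ P b) -> finite Q.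
Proof.
  intros hfun [lb hl] hq.
  assert (forall lb, exists la, forall a, (exists b, R a b /\ In b lb) -> In a la) as key.
  { induction lb0 as [|b lb' IH].
    - exists []. intros a (b & _ & []).
    - destruct IH as [la' hla'].
      destruct (classic (exists a, R a b)) as [[a0 ha0]|hn].
      + exists (a0 :: la'). intros a (b' & hr & [<-|hin]).
        * left. eapply hfun; eauto.
        * right. apply hla'. eauto.
      + exists la'. intros a (b' & hr & [<-|hin]).
        * exfalso; apply hn; eauto.
        * apply hla'; eauto. }
  destruct (key lb) as [la hla]. exists la. intros a ha.
  destruct (hq a ha) as (b & hr & hb). apply hla. eauto.
Qed.

Lemma fin_preimage {A B} (f : A -> B) (P : B -> Prop) (Q : A -> Prop) :
  (forall a a', f a = f a' -> a = a') ->
  finite P -> (forall a, Q a -> P (f a)) -> finite Q.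
Proof.
  intros hinj hP hq. apply (fin_rel (fun a b => f a = b) P Q); auto.
  - intros a a' b <- h. apply hinj. auto.
  - intros a ha. exists (f a). auto.
Qed.

Lemma fin_image {A B} (f : A -> B) (P : A -> Prop) (Q : B -> Prop) :
  finite P -> (forall b, Q b -> exists a, P a /\ f a = b) -> finite Q.
Proof.
  intros [l hl] h. exists (map f l). intros b hb. destruct (h b hb) as (a & ha & <-).
  apply in_map, hl, ha.
Qed.

Lemma fin_bigunion {A B} (l : list A) (P : A -> B -> Prop) :
  (forall a, In a l -> finite (P a)) -> finite (fun b => exists a, In a l /\ P a b).
Proof.
  induction l as [|a l IH]; intros h.
  - exists []. intros b (a & [] & _).
  - destruct (h a (or_introl eq_refl)) as [la hla].
    destruct IH as [lr hlr]. { intros a' ha'. apply h. right. auto. }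
    exists (la ++ lr). intros b (a' & [<-|hin] & hp); apply in_or_app.
    + left. auto.
    + right. apply hlr. eauto.
Qed.

Lemma fin_pigeon {T} (P : T -> Prop) (f : nat -> T) :
  finite P -> (forall n m, f n = f m -> n = m) -> (forall n, P (f n)) -> False.
Proof.
  intros [l hl] hinj hP.
  assert (NoDup (map f (seq 0 (S (length l))))) as hnd.
  { apply FinFun.Injective_map_NoDup. intros x y; apply hinj. apply seq_NoDup. }
  assert (incl (map f (seq 0 (S (length l)))) l) as hinc.
  { intros x hx. apply in_map_iff in hx. destruct hx as (n & <- & _). apply hl, hP. }
  pose proof (NoDup_incl_length hnd hinc) as hlen.
  rewrite length_map, length_seq in hlen. lia.
Qed.

Lemma min_exists (P : nat -> Prop) : (exists n, P n) -> exists n, P n /\ forall i, i < n -> ~ P i.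
Proof.
  intros [n hn]. revert hn. induction n as [n IH] using lt_wf_ind. intros hn.
  destruct (classic (exists i, i < n /\ P i)) as [(i & hi & hpi)|hno].
  - apply (IH i hi hpi).
  - exists n. split; auto. intros i hi hpi. apply hno. eauto.
Qed.

Lemma sig_eq {A} (P : A -> Prop) (x y : A) (hx : P x) (hy : P y) :
  x = y -> exist P x hx = exist P y hy.
Proof. intros ->. f_equal. apply proof_irrelevance. Qed.

Section Walks.
Variable G : graph.

Inductive walk : V G -> list (Ed G) -> V G -> Prop :=
| walk_nil u : walk u [] u
| walk_cons u e l v : src e = u -> walk (rng e) l v -> walk u (e :: l) v.

Definition reach u v := exists l, walk u l v.

Lemma walk_nil_inv u v : walk u [] v -> u = v.
Proof. intros h; inversion h; auto. Qed.

Lemma walk_cons_inv u e l v : walk u (e :: l) v -> src e = u /\ walk (rng e) l v.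
Proof. intros h; inversion h; subst; auto. Qed.

Lemma reach_refl u : reach u u.
Proof. exists []. constructor. Qed.

Lemma walk_app u l1 w l2 v : walk u l1 w -> walk w l2 v -> walk u (l1 ++ l2) v.
Proof. induction 1; simpl; intros; auto. constructor; auto. Qed.

Lemma walk_app_inv u l1 l2 v : walk u (l1 ++ l2) v -> exists w, walk u l1 w /\ walk w l2 v.
Proof.
  revert u. induction l1 as [|e l1 IH]; simpl; intros u h.
  - exists u. split; auto. constructor.
  - inversion h; subst. destruct (IH _ H4) as (w & h1 & h2). exists w. split; auto.
    constructor; auto.
Qed.

Lemma reach_trans u w v : reach u w -> reach w v -> reach u v.
Proof. intros [l1 h1] [l2 h2]. exists (l1 ++ l2). eapply walk_app; eauto. Qed.

Lemma reach_edge e : reach (src e) (rng e).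
Proof. exists [e]. repeat constructor. Qed.

Lemma walk_chain e p u v : walk u (e :: p) v <-> chain (e :: p) /\ src e = u /\ rng (lastE e p) = v.
Proof.
  revert e u. induction p as [|f p IH]; intros e u.
  - simpl. split.
    + intros h. inversion h; subst. inversion H4; subst. auto.
    + intros (_ & <- & <-). repeat constructor.
  - split.
    + intros h. inversion h; subst. apply IH in H4. destruct H4 as (hc & hs & hl).
      simpl. auto.
    + intros ((hr & hc) & hs & hl). constructor; auto. rewrite hr. apply IH. simpl in hl. auto.
Qed.

Lemma geq_reach u v : geq G u v <-> reach u v.
Proof.
  split.
  - intros [<-|(e & p & hc & hs & hl)].
    + apply reach_refl.
    + exists (e :: p). apply walk_chain. auto.
  - intros [l h]. destruct l as [|e p].
    + inversion h; subst. left; auto.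
    + right. exists e, p. apply walk_chain. auto.
Qed.

Lemma walk_in u l v e : walk u l v -> In e l ->
  exists l1 l2, l = l1 ++ e :: l2 /\ walk u l1 (src e) /\ walk (rng e) l2 v.
Proof.
  intros h hin. destruct (in_split _ _ hin) as (l1 & l2 & ->).
  destruct (walk_app_inv _ _ _ _ h) as (w & h1 & h2). inversion h2; subst.
  exists l1, l2. auto.
Qed.

Lemma walk_in_reach u l v e : walk u l v -> In e l -> reach u (src e) /\ reach (src e) v /\ reach (rng e) v.
Proof.
  intros h hin. destruct (walk_in _ _ _ _ h hin) as (l1 & l2 & _ & h1 & h2).
  repeat split; [exists l1; auto| |exists l2; auto].
  apply reach_trans with (rng e). apply reach_edge. exists l2; auto.
Qed.

Lemma walk_last u l x v : walk u (l ++ [x]) v -> rng x = v.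
Proof. intros h. destruct (walk_app_inv _ _ _ _ h) as (w & _ & h2). inversion h2; subst. inversion H4; auto. Qed.

Lemma walk_nonempty_src u e l v : walk u (e :: l) v -> src e = u.
Proof. intros h; inversion h; auto. Qed.

Lemma cycleW c : cycle G c <-> c <> [] /\ (exists u, walk u c u) /\ NoDup (map (@src G) c).
Proof.
  split.
  - intros (e & p & -> & hc & hl & hnd). split; [discriminate|]. split; auto.
    exists (src e). apply walk_chain. auto.
  - intros (hne & (u & hw) & hnd). destruct c as [|e p]; [congruence|].
    apply walk_chain in hw. destruct hw as (hc & hs & hl). exists e, p. subst. auto.
Qed.

Lemma cycle_walk c : cycle G c -> exists e p, c = e :: p /\ walk (src e) c (src e).
Proof.
  intros hc. apply cycleW in hc as (hne & (u & hw) & _). destruct c as [|e p]; [congruence|].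
  exists e, p. split; auto. rewrite (walk_nonempty_src _ _ _ _ hw). auto.
Qed.

Lemma cycle_reach c e f : cycle G c -> In e c -> In f c -> reach (src e) (src f).
Proof.
  intros hc he hf. destruct (cycle_walk c hc) as (e0 & p & hceq & hw).
  destruct (walk_in_reach _ _ _ _ hw he) as (_ & h1 & _).
  destruct (walk_in_reach _ _ _ _ hw hf) as (h2 & _ & _).
  eapply reach_trans; eauto.
Qed.

Lemma cycle_succ c e : cycle G c -> In e c -> exists f, In f c /\ src f = rng e.
Proof.
  intros hc he. destruct (cycle_walk c hc) as (e0 & p & hceq & hw).
  subst c.
  destruct (walk_in _ _ _ _ hw he) as (l1 & l2 & heq & h1 & h2).
  rewrite heq.
  destruct l2 as [|f l2].
  - inversion h2; subst. exists e0. split; auto. rewrite <- heq. left; auto.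
  - inversion h2; subst. exists f. split; auto. apply in_or_app. right. right. left. auto.
Qed.

Lemma on_cycle_reach c u v : cycle G c -> on_cycle G c u -> on_cycle G c v -> reach u v.
Proof. intros hc (e & he & <-) (f & hf & <-). eapply cycle_reach; eauto. Qed.

Lemma extremeW c : extreme G c <-> has_exit G c /\
  (forall u l v, walk u l v -> l <> [] -> on_cycle G c u -> exists w, on_cycle G c w /\ reach v w).
Proof.
  split.
  - intros (hx & h). split; auto. intros u l v hw hne hon. destruct l as [|e p]; [congruence|].
    apply walk_chain in hw as (hc & hs & hl). subst. destruct (h e p hc hon) as (w & hw1 & hw2).
    exists w. split; auto. apply geq_reach. auto.
  - intros (hx & h). split; auto. intros e p hc hon.
    destruct (h (src e) (e :: p) (rng (lastE e p))) as (w & h1 & h2); auto.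
    + apply walk_chain. auto.
    + discriminate.
    + exists w. split; auto. apply geq_reach. auto.
Qed.

Lemma not_nodup_split {A B} (f : A -> B) (l : list A) : ~ NoDup (map f l) ->
  exists l1 a l2 b l3, l = l1 ++ a :: l2 ++ b :: l3 /\ f a = f b.
Proof.
  induction l as [|x l IH]; simpl; intros h.
  - exfalso. apply h. constructor.
  - destruct (classic (In (f x) (map f l))) as [hin|hnin].
    + apply in_map_iff in hin. destruct hin as (b & hb & hbin).
      destruct (in_split _ _ hbin) as (l2 & l3 & ->).
      exists [], x, l2, b, l3. simpl. auto.
    + destruct (classic (NoDup (map f l))) as [hnd|hnd].
      * exfalso. apply h. constructor; auto.
      * destruct (IH hnd) as (l1 & a & l2 & b & l3 & -> & hab).
        exists (x :: l1), a, l2, b, l3. simpl. auto.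
Qed.

Lemma extract_cycle : forall n l u, length l <= n -> l <> [] -> walk u l u ->
  exists c, cycle G c /\ incl c l.
Proof.
  induction n as [|n IH]; intros l u hlen hne hw.
  - destruct l; simpl in hlen; [congruence|lia].
  - destruct (classic (NoDup (map (@src G) l))) as [hnd|hnd].
    + exists l. split; [|apply incl_refl]. apply cycleW. eauto.
    + destruct (not_nodup_split _ _ hnd) as (l1 & a & l2 & b & l3 & heq & hab).
      subst l. destruct (walk_app_inv _ _ _ _ hw) as (w1 & _ & hw2).
      inversion hw2; subst.
      destruct (walk_app_inv _ _ _ _ H4) as (w2 & hw3 & hw4). inversion hw4; subst.
      destruct (IH (a :: l2) (src a)) as (c & hc & hinc).
      * rewrite length_app in hlen. simpl in hlen. rewrite length_app in hlen. simpl in hlen. simpl. lia.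
      * discriminate.
      * constructor; auto. rewrite hab. auto.
      * exists c. split; auto. intros x hx. apply hinc in hx. apply in_or_app. right.
        destruct hx as [<-|hx]; [left; auto|right; apply in_or_app; left; auto].
Qed.

Lemma closed_walk_cycle l u : l <> [] -> walk u l u -> exists c, cycle G c /\ incl c l.
Proof. intros; eapply extract_cycle; eauto. Qed.

Lemma inf_path_walk (a : nat -> Ed G) : inf_path G a ->
  forall k i, walk (src (a i)) (map a (seq i k)) (src (a (i + k))).
Proof.
  intros ha k. induction k as [|k IH]; intros i.
  - simpl. rewrite Nat.add_0_r. constructor.
  - simpl. constructor; auto. rewrite ha. replace (i + S k) with (S i + k) by lia. apply IH.
Qed.

Lemma inf_path_reach (a : nat -> Ed G) : inf_path G a -> forall i j, i <= j -> reach (src (a i)) (src (a j)).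
Proof.
  intros ha i j hij. exists (map a (seq i (j - i))).
  replace j with (i + (j - i)) at 2 by lia. apply inf_path_walk; auto.
Qed.

Lemma root_reach (W : V G -> Prop) u v : reach u v -> root G W v -> root G W u.
Proof.
  intros h (w & hw & hg). exists w. split; auto. apply geq_reach. apply geq_reach in hg.
  eapply reach_trans; eauto.
Qed.

Lemma hered_reach (H : V G -> Prop) u v : hereditary G H -> H u -> reach u v -> H v.
Proof. intros hH hu hr. apply (hH u v hu). apply geq_reach; auto. Qed.

End Walks.
Arguments walk {G} _ _ _.
Arguments reach {G} _ _.


Definition bad (G : graph) (a : nat -> Ed G) (e : Ed G) : Prop :=
  inf_path_vertices G a (src e) /\ ~ root G (inf_path_vertices G a) (rng e).

Section Morph.
Variables G1 G2 : graph.
Variable mV : V G1 -> V G2.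
Variable mE : Ed G1 -> Ed G2.
Hypothesis m_src : forall e, src (mE e) = mV (src e).
Hypothesis m_rng : forall e, rng (mE e) = mV (rng e).
Hypothesis mV_inj : forall x y, mV x = mV y -> x = y.
Hypothesis mE_inj : forall x y, mE x = mE y -> x = y.

Lemma walk_map u l v : walk u l v -> walk (mV u) (map mE l) (mV v).
Proof.
  induction 1; simpl; constructor.
  - rewrite m_src; congruence.
  - rewrite m_rng. auto.
Qed.

Lemma reach_map u v : reach u v -> reach (mV u) (mV v).
Proof. intros [l h]. exists (map mE l). apply walk_map; auto. Qed.

Lemma walk_unmap l : forall u v, walk (mV u) (map mE l) (mV v) -> walk u l v.
Proof.
  induction l as [|e l IH]; simpl; intros u v h.
  - apply walk_nil_inv in h. rewrite (mV_inj _ _ h). constructor.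
  - apply walk_cons_inv in h as [h1 h2].
    constructor. apply mV_inj. rewrite <- m_src. auto. apply IH. rewrite <- m_rng. auto.
Qed.

Lemma cycle_map c : cycle G1 c <-> cycle G2 (map mE c).
Proof.
  rewrite !cycleW. rewrite map_map.
  assert (map (fun x => src (mE x)) c = map mV (map (@src G1) c)) as E.
  { rewrite map_map. apply map_ext. auto. }
  rewrite E. split.
  - intros (hne & (u & hw) & hnd). split; [destruct c; simpl; congruence|]. split.
    + exists (mV u). apply walk_map; auto.
    + apply Injective_map_NoDup; auto.
  - intros (hne & (u & hw) & hnd). split; [destruct c; simpl in *; congruence|]. split.
    + destruct c as [|e p]; [simpl in hne; congruence|]. simpl in hw.
      pose proof (walk_cons_inv _ _ _ _ _ hw) as [hs _].
      exists (src e). apply walk_unmap. simpl. rewrite <- m_src, hs. auto.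
    + eapply NoDup_map_inv; eauto.
Qed.

Lemma on_cycle_map c v : on_cycle G1 c v <-> on_cycle G2 (map mE c) (mV v).
Proof.
  split.
  - intros (e & he & <-). exists (mE e). split; [apply in_map; auto|auto].
  - intros (e2 & he & hs). apply in_map_iff in he. destruct he as (e & <- & he).
    exists e. split; auto. apply mV_inj. rewrite <- m_src. auto.
Qed.

Lemma in_map_inj c f : In (mE f) (map mE c) <-> In f c.
Proof.
  split; [|apply in_map]. intros h. apply in_map_iff in h. destruct h as (x & hx & hin).
  rewrite <- (mE_inj _ _ hx). auto.
Qed.

Lemma exit_map c f : exit G1 c f <-> exit G2 (map mE c) (mE f).
Proof.
  unfold exit. rewrite in_map_inj, m_src, <- on_cycle_map. tauto.
Qed.

Lemma pigeon_path_lift (a2 : nat -> Ed G2) :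
  (forall n, exists e1, mE e1 = a2 n) -> exists a1, forall n, mE (a1 n) = a2 n.
Proof.
  intros h. exists (fun n => proj1_sig (constructive_indefinite_description _ (h n))).
  intros n. destruct (constructive_indefinite_description _ (h n)). simpl. auto.
Qed.

Lemma inf_path_map (a1 : nat -> Ed G1) (a2 : nat -> Ed G2) : (forall n, mE (a1 n) = a2 n) ->
  (inf_path G1 a1 <-> inf_path G2 a2).
Proof.
  intros h. unfold inf_path. split; intros hp n.
  - rewrite <- !h, m_src, m_rng. congruence.
  - apply mV_inj. rewrite <- m_src, <- m_rng, !h. auto.
Qed.

Lemma vert_map (a1 : nat -> Ed G1) (a2 : nat -> Ed G2) : (forall n, mE (a1 n) = a2 n) ->
  forall x, inf_path_vertices G1 a1 x <-> inf_path_vertices G2 a2 (mV x).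
Proof.
  intros h x. unfold inf_path_vertices. split.
  - intros (n & <-). exists n. rewrite <- h, m_src. auto.
  - intros (n & hn). exists n. apply mV_inj. rewrite <- m_src, h. auto.
Qed.

Lemma vert_img (a1 : nat -> Ed G1) (a2 : nat -> Ed G2) : (forall n, mE (a1 n) = a2 n) ->
  forall x2, inf_path_vertices G2 a2 x2 -> exists x1, mV x1 = x2.
Proof. intros h x2 (n & <-). exists (src (a1 n)). rewrite <- h, m_src. auto. Qed.

Section Fwd.
Variable I : V G2 -> Prop.
Hypothesis hI : forall v2, I v2 <-> exists v1, mV v1 = v2.
Hypothesis fwd : forall e2, I (src e2) -> exists e1, mE e1 = e2.

Lemma walk_lift_fwd l2 : forall u v2, walk (mV u) l2 v2 ->
  exists l1 v1, l2 = map mE l1 /\ v2 = mV v1 /\ walk u l1 v1.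
Proof.
  induction l2 as [|e2 l2 IH]; intros u v2 h.
  - apply walk_nil_inv in h. subst. exists [], u. repeat split; auto. constructor.
  - apply walk_cons_inv in h as [h3 h4].
    destruct (fwd e2) as (e1 & <-). { rewrite h3. apply hI. eauto. }
    rewrite m_src in h3. apply mV_inj in h3. subst u.
    rewrite m_rng in h4. destruct (IH _ _ h4) as (l1 & v1 & -> & -> & hw).
    exists (e1 :: l1), v1. repeat split; auto. constructor; auto.
Qed.

Lemma reach_lift_fwd u v2 : reach (mV u) v2 -> exists v1, v2 = mV v1 /\ reach u v1.
Proof. intros [l h]. destruct (walk_lift_fwd _ _ _ h) as (l1 & v1 & _ & -> & hw). exists v1. split; auto. exists l1; auto. Qed.

Lemma reach_fwd_iff u v : reach (mV u) (mV v) <-> reach u v.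
Proof.
  split; [|apply reach_map]. intros h. destruct (reach_lift_fwd _ _ h) as (v1 & hv & hr).
  apply mV_inj in hv. subst. auto.
Qed.

Lemma F_cycle_lift c2 : cycle G2 c2 -> (exists f, In f c2 /\ I (src f)) ->
  exists c1, c2 = map mE c1 /\ cycle G1 c1.
Proof.
  intros hc (f & hf & hIf). destruct (cycle_walk _ _ hc) as (e & p & hceq & hw).
  apply hI in hIf. destruct hIf as (u1 & hu1).
  assert (reach (src f) (src e)) as hr by (apply (cycle_reach _ c2); auto; rewrite hceq; left; auto).
  rewrite <- hu1 in hr. destruct (reach_lift_fwd _ _ hr) as (u0 & hu0 & _).
  rewrite hu0 in hw. destruct (walk_lift_fwd _ _ _ hw) as (l1 & v1 & hl & hv & hw1).
  apply mV_inj in hv. subst v1. exists l1. split; [congruence|].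
  apply cycle_map. rewrite <- hl. congruence.
Qed.

Lemma F_has_exit c1 : has_exit G1 c1 <-> has_exit G2 (map mE c1).
Proof.
  split.
  - intros (f & hf). exists (mE f). apply exit_map; auto.
  - intros (f2 & hf2). destruct (fwd f2) as (f1 & <-).
    + destruct hf2 as (_ & (e & he & hs)). apply in_map_iff in he. destruct he as (e1 & <- & _).
      apply hI. exists (src e1). rewrite <- hs, m_src. auto.
    + exists f1. apply exit_map; auto.
Qed.

Lemma F_extreme c1 : extreme G1 c1 <-> extreme G2 (map mE c1).
Proof.
  rewrite !extremeW, <- F_has_exit. split; intros (hx & h); split; auto.
  - intros u2 l2 v2 hw hne hon.
    assert (exists u1, mV u1 = u2) as (u1 & <-).
    { destruct hon as (e & he & hs). apply in_map_iff in he. destruct he as (e1 & <- & _).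
      exists (src e1). rewrite <- hs, m_src. auto. }
    destruct (walk_lift_fwd _ _ _ hw) as (l1 & v1 & -> & -> & hw1).
    apply on_cycle_map in hon.
    destruct (h u1 l1 v1 hw1) as (w & hw2 & hr); auto. { destruct l1; simpl in *; congruence. }
    exists (mV w). split; [apply on_cycle_map; auto|]. apply reach_map; auto.
  - intros u l v hw hne hon.
    destruct (h (mV u) (map mE l) (mV v)) as (w2 & hon2 & hr).
    + apply walk_map; auto.
    + destruct l; simpl; congruence.
    + apply on_cycle_map; auto.
    + destruct (reach_lift_fwd _ _ hr) as (w1 & -> & hr1). exists w1. split; auto.
      apply on_cycle_map; auto.
Qed.

Lemma F_emitter v : infinite_emitter G1 v <-> infinite_emitter G2 (mV v).
Proof.
  unfold infinite_emitter. split; intros h hf; apply h.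
  - apply (fin_preimage mE _ _ mE_inj hf). intros a <-. rewrite m_src. auto.
  - apply (fin_image mE _ _ hf). intros b hb. destruct (fwd b) as (a & <-).
    + apply hI. eauto.
    + exists a. split; auto. apply mV_inj. rewrite <- m_src. auto.
Qed.

Lemma F_path a2 : inf_path G2 a2 -> I (src (a2 0)) -> exists a1, forall n, mE (a1 n) = a2 n.
Proof.
  intros hp h0. apply pigeon_path_lift. intros n. apply fwd.
  induction n as [|n IH]; auto. rewrite <- hp. destruct (fwd _ IH) as (e1 & <-).
  rewrite m_rng. apply hI. eauto.
Qed.

Lemma F_root a1 a2 : (forall n, mE (a1 n) = a2 n) -> forall y,
  root G1 (inf_path_vertices G1 a1) y <-> root G2 (inf_path_vertices G2 a2) (mV y).
Proof.
  intros h y. unfold root. split.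
  - intros (x & hx & hg). exists (mV x). split; [apply (vert_map a1 a2 h); auto|].
    apply geq_reach. apply geq_reach in hg. apply reach_map. auto.
  - intros (x2 & hx & hg). destruct (vert_img a1 a2 h _ hx) as (x1 & <-).
    exists x1. split; [apply (vert_map a1 a2 h); auto|]. apply geq_reach. apply geq_reach in hg.
    apply reach_fwd_iff. auto.
Qed.

Lemma F_bad a1 a2 : (forall n, mE (a1 n) = a2 n) -> (finite (bad G1 a1) <-> finite (bad G2 a2)).
Proof.
  intros h. split; intros hf.
  - apply (fin_image mE _ _ hf). intros b (hb1 & hb2).
    destruct (fwd b) as (a & <-).
    + destruct (vert_img a1 a2 h _ hb1) as (x1 & hx). apply hI. eauto.
    + exists a. split; auto. split.
      * apply (vert_map a1 a2 h). rewrite <- m_src. auto.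
      * rewrite (F_root a1 a2 h). rewrite <- m_rng. auto.
  - apply (fin_preimage mE _ _ mE_inj hf). intros a (ha1 & ha2). split.
    + rewrite m_src. apply (vert_map a1 a2 h). auto.
    + rewrite m_rng. rewrite <- (F_root a1 a2 h). auto.
Qed.

Definition FA1 := forall c, cycle G2 c -> (exists f, In f c /\ I (src f)) -> ~ has_exit G2 c \/ extreme G2 c.
Definition FA2 := forall v, I v -> infinite_emitter G2 v -> exists c, cycle G2 c /\ on_cycle G2 c v.
Definition FA3 := forall a, inf_path G2 a -> I (src (a 0)) -> finite (bad G2 a).
Definition FNE := forall c, cycle G2 c -> (exists f, In f c /\ I (src f)) -> has_exit G2 c.

Lemma img_cycle c1 : c1 <> [] -> exists f, In f (map mE c1) /\ I (src f).
Proof.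
  intros hne. destruct c1 as [|e c1]; [congruence|]. exists (mE e). split; [left; auto|].
  apply hI. exists (src e). rewrite m_src. auto.
Qed.

Theorem fwd_AR : all_reflexive G1 <-> FA1 /\ FA2 /\ FA3.
Proof.
  split.
  - intros (ha & hb & hc). split; [|split].
    + intros c2 hc2 hf. destruct (F_cycle_lift c2 hc2 hf) as (c1 & -> & hc1).
      rewrite <- F_has_exit, <- F_extreme. auto.
    + intros v2 hv hinf. apply hI in hv. destruct hv as (v1 & <-).
      apply F_emitter in hinf. destruct (hb v1 hinf) as (c1 & hc1 & hon).
      exists (map mE c1). split; [apply cycle_map; auto|apply on_cycle_map; auto].
    + intros a2 hp h0. destruct (F_path a2 hp h0) as (a1 & ha1).
      apply (F_bad a1 a2 ha1). apply hc. apply (inf_path_map a1 a2 ha1). auto.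
  - intros (ha & hb & hc). split; [|split].
    + intros c1 hc1. rewrite F_has_exit, F_extreme. apply ha.
      * apply cycle_map; auto.
      * apply img_cycle. apply cycleW in hc1. tauto.
    + intros v1 hinf. apply F_emitter in hinf. destruct (hb (mV v1)) as (c2 & hc2 & hon); auto.
      { apply hI; eauto. }
      destruct (F_cycle_lift c2 hc2) as (c1 & -> & hc1).
      { destruct hon as (e & he & hs). exists e. split; auto. rewrite hs. apply hI. eauto. }
      exists c1. split; auto. apply on_cycle_map; auto.
    + intros a1 hp. apply (F_bad a1 (fun n => mE (a1 n))); auto. apply hc.
      * apply (inf_path_map a1); auto.
      * apply hI. exists (src (a1 0)). rewrite m_src. auto.
Qed.

Theorem fwd_NE : (forall c, cycle G1 c -> has_exit G1 c) <-> FNE.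
Proof.
  split.
  - intros h c2 hc2 hf. destruct (F_cycle_lift c2 hc2 hf) as (c1 & -> & hc1).
    apply F_has_exit. auto.
  - intros h c1 hc1. apply F_has_exit. apply h. apply cycle_map; auto.
    apply img_cycle. apply cycleW in hc1. tauto.
Qed.
End Fwd.

Section Bwd.
Variable I : V G2 -> Prop.
Hypothesis hI : forall v2, I v2 <-> exists v1, mV v1 = v2.
Hypothesis bwd : forall e2, I (rng e2) -> exists e1, mE e1 = e2.

Lemma walk_lift_bwd l2 : forall u2 v, walk u2 l2 (mV v) ->
  exists l1 u1, l2 = map mE l1 /\ u2 = mV u1 /\ walk u1 l1 v.
Proof.
  induction l2 as [|e2 l2 IH]; intros u2 v h.
  - apply walk_nil_inv in h. subst. exists [], v. repeat split; auto. constructor.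
  - apply walk_cons_inv in h as [h3 h4]. subst u2.
    destruct (IH _ _ h4) as (l1 & u1 & -> & hu & hw).
    destruct (bwd e2) as (e1 & <-). { rewrite hu. apply hI. eauto. }
    rewrite m_rng in hu. apply mV_inj in hu. subst u1.
    exists (e1 :: l1), (src e1). repeat split; auto. constructor; auto.
Qed.

Lemma reach_lift_bwd u2 v : reach u2 (mV v) -> exists u1, u2 = mV u1 /\ reach u1 v.
Proof. intros [l h]. destruct (walk_lift_bwd _ _ _ h) as (l1 & u1 & _ & -> & hw). exists u1. split; auto. exists l1; auto. Qed.

Lemma reach_bwd_iff u v : reach (mV u) (mV v) <-> reach u v.
Proof.
  split; [|apply reach_map]. intros h. destruct (reach_lift_bwd _ _ h) as (u1 & hu & hr).
  apply mV_inj in hu. subst. auto.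
Qed.

Lemma I_back u v : reach u v -> I v -> I u.
Proof.
  intros h hv. apply hI in hv. destruct hv as (v1 & <-). destruct (reach_lift_bwd _ _ h) as (u1 & -> & _).
  apply hI. eauto.
Qed.

Definition has_exit_in c := exists f, exit G2 c f /\ I (rng f).
Definition extreme_in c := has_exit_in c /\
  forall u l v, walk u l v -> l <> [] -> on_cycle G2 c u -> I v -> exists w, on_cycle G2 c w /\ reach v w.

Lemma B_cycle_lift c2 : cycle G2 c2 -> (exists f, In f c2 /\ I (src f)) ->
  exists c1, c2 = map mE c1 /\ cycle G1 c1.
Proof.
  intros hc (f & hf & hIf). destruct (cycle_walk _ _ hc) as (e & p & hceq & hw).
  assert (reach (src e) (src f)) as hr by (apply (cycle_reach _ c2); auto; rewrite hceq; left; auto).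
  pose proof (I_back _ _ hr hIf) as hIe. apply hI in hIe. destruct hIe as (u0 & hu0).
  rewrite <- hu0 in hw at 2. destruct (walk_lift_bwd _ _ _ hw) as (l1 & u1 & hl & hv & hw1).
  rewrite <- hu0 in hv. apply mV_inj in hv. subst u1. exists l1. split; [congruence|].
  apply cycle_map. rewrite <- hl. congruence.
Qed.

Lemma B_has_exit c1 : has_exit G1 c1 <-> has_exit_in (map mE c1).
Proof.
  split.
  - intros (f & hf). exists (mE f). split; [apply exit_map; auto|]. rewrite m_rng. apply hI; eauto.
  - intros (f2 & hf2 & hi). destruct (bwd f2 hi) as (f1 & <-). exists f1. apply exit_map; auto.
Qed.

Lemma B_extreme c1 : extreme G1 c1 <-> extreme_in (map mE c1).
Proof.
  rewrite extremeW. unfold extreme_in. rewrite <- B_has_exit. split; intros (hx & h); split; auto.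
  - intros u2 l2 v2 hw hne hon hiv.
    apply hI in hiv. destruct hiv as (v1 & <-).
    destruct (walk_lift_bwd _ _ _ hw) as (l1 & u1 & -> & -> & hw1).
    apply on_cycle_map in hon.
    destruct (h u1 l1 v1 hw1) as (w & hw2 & hr); auto. { destruct l1; simpl in *; congruence. }
    exists (mV w). split; [apply on_cycle_map; auto|]. apply reach_map; auto.
  - intros u l v hw hne hon.
    destruct (h (mV u) (map mE l) (mV v)) as (w2 & hon2 & hr).
    + apply walk_map; auto.
    + destruct l; simpl; congruence.
    + apply on_cycle_map; auto.
    + apply hI; eauto.
    + assert (exists w1, mV w1 = w2) as (w1 & <-).
      { destruct hon2 as (e & he & hs). apply in_map_iff in he. destruct he as (e1 & <- & _).
        exists (src e1). rewrite <- hs, m_src. auto. }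
      exists w1. split; [apply on_cycle_map; auto|]. apply reach_bwd_iff. auto.
Qed.

Lemma B_emitter v : infinite_emitter G1 v <-> ~ finite (fun e2 => src e2 = mV v /\ I (rng e2)).
Proof.
  unfold infinite_emitter. split; intros h hf; apply h.
  - apply (fin_preimage mE _ _ mE_inj hf). intros a <-. rewrite m_src, m_rng. split; auto.
    apply hI; eauto.
  - apply (fin_image mE _ _ hf). intros b (hb & hi). destruct (bwd b hi) as (a & <-).
    exists a. split; auto. apply mV_inj. rewrite <- m_src. auto.
Qed.

Lemma B_path a2 : inf_path G2 a2 -> (forall n, I (src (a2 n))) -> exists a1, forall n, mE (a1 n) = a2 n.
Proof.
  intros hp h. apply pigeon_path_lift. intros n. apply bwd. rewrite hp. auto.
Qed.

Lemma B_root a1 a2 : (forall n, mE (a1 n) = a2 n) -> forall y,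
  root G1 (inf_path_vertices G1 a1) y <-> root G2 (inf_path_vertices G2 a2) (mV y).
Proof.
  intros h y. unfold root. split.
  - intros (x & hx & hg). exists (mV x). split; [apply (vert_map a1 a2 h); auto|].
    apply geq_reach. apply geq_reach in hg. apply reach_map. auto.
  - intros (x2 & hx & hg). destruct (vert_img a1 a2 h _ hx) as (x1 & <-).
    exists x1. split; [apply (vert_map a1 a2 h); auto|]. apply geq_reach. apply geq_reach in hg.
    apply reach_bwd_iff. auto.
Qed.

Lemma B_bad a1 a2 : (forall n, mE (a1 n) = a2 n) ->
  (finite (bad G1 a1) <-> finite (fun e => bad G2 a2 e /\ I (rng e))).
Proof.
  intros h. split; intros hf.
  - apply (fin_image mE _ _ hf). intros b ((hb1 & hb2) & hi).
    destruct (bwd b hi) as (a & <-).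
    exists a. split; auto. split.
    + apply (vert_map a1 a2 h). rewrite <- m_src. auto.
    + rewrite (B_root a1 a2 h). rewrite <- m_rng. auto.
  - apply (fin_preimage mE _ _ mE_inj hf). intros a (ha1 & ha2). split; [split|].
    + rewrite m_src. apply (vert_map a1 a2 h). auto.
    + rewrite m_rng. rewrite <- (B_root a1 a2 h). auto.
    + rewrite m_rng. apply hI; eauto.
Qed.

Definition BA1 := forall c, cycle G2 c -> (exists f, In f c /\ I (src f)) -> ~ has_exit_in c \/ extreme_in c.
Definition BA2 := forall v, I v -> ~ finite (fun e => src e = v /\ I (rng e)) -> exists c, cycle G2 c /\ on_cycle G2 c v.
Definition BA3 := forall a, inf_path G2 a -> (forall n, I (src (a n))) -> finite (fun e => bad G2 a e /\ I (rng e)).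
Definition BNE := forall c, cycle G2 c -> (exists f, In f c /\ I (src f)) -> has_exit_in c.

Lemma img_cycleB c1 : c1 <> [] -> exists f, In f (map mE c1) /\ I (src f).
Proof.
  intros hne. destruct c1 as [|e c1]; [congruence|]. exists (mE e). split; [left; auto|].
  apply hI. exists (src e). rewrite m_src. auto.
Qed.

Theorem bwd_AR : all_reflexive G1 <-> BA1 /\ BA2 /\ BA3.
Proof.
  split.
  - intros (ha & hb & hc). split; [|split].
    + intros c2 hc2 hf. destruct (B_cycle_lift c2 hc2 hf) as (c1 & -> & hc1).
      rewrite <- B_has_exit, <- B_extreme. auto.
    + intros v2 hv hinf. apply hI in hv. destruct hv as (v1 & <-).
      apply B_emitter in hinf. destruct (hb v1 hinf) as (c1 & hc1 & hon).
      exists (map mE c1). split; [apply cycle_map; auto|apply on_cycle_map; auto].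
    + intros a2 hp h0. destruct (B_path a2 hp h0) as (a1 & ha1).
      apply (B_bad a1 a2 ha1). apply hc. apply (inf_path_map a1 a2 ha1). auto.
  - intros (ha & hb & hc). split; [|split].
    + intros c1 hc1. rewrite B_has_exit, B_extreme. apply ha.
      * apply cycle_map; auto.
      * apply img_cycleB. apply cycleW in hc1. tauto.
    + intros v1 hinf. apply B_emitter in hinf. destruct (hb (mV v1)) as (c2 & hc2 & hon); auto.
      { apply hI; eauto. }
      destruct (B_cycle_lift c2 hc2) as (c1 & -> & hc1).
      { destruct hon as (e & he & hs). exists e. split; auto. rewrite hs. apply hI. eauto. }
      exists c1. split; auto. apply on_cycle_map; auto.
    + intros a1 hp. apply (B_bad a1 (fun n => mE (a1 n))); auto. apply hc.
      * apply (inf_path_map a1); auto.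
      * intros n. apply hI. exists (src (a1 n)). rewrite m_src. auto.
Qed.

Theorem bwd_NE : (forall c, cycle G1 c -> has_exit G1 c) <-> BNE.
Proof.
  split.
  - intros h c2 hc2 hf. destruct (B_cycle_lift c2 hc2 hf) as (c1 & -> & hc1).
    apply B_has_exit. auto.
  - intros h c1 hc1. apply B_has_exit. apply h. apply cycle_map; auto.
    apply img_cycleB. apply cycleW in hc1. tauto.
Qed.
End Bwd.
End Morph.


Lemma sig_ext {A} (P : A -> Prop) (x y : {a | P a}) : proj1_sig x = proj1_sig y -> x = y.
Proof. destruct x, y; simpl. apply sig_eq. Qed.

Lemma list_min {A} (f : A -> nat) (l : list A) : l <> [] -> exists x, In x l /\ forall y, In y l -> f x <= f y.
Proof.
  induction l as [|a l IH]; intros hne; [congruence|].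
  destruct l as [|b l].
  - exists a. split; [left; auto|]. intros y [<-|[]]; auto.
  - destruct IH as (x & hx & hmin); [discriminate|].
    destruct (le_lt_dec (f a) (f x)) as [hle|hlt].
    + exists a. split; [left; auto|]. intros y [<-|hy]; auto. specialize (hmin y hy). lia.
    + exists x. split; [right; auto|]. intros y [<-|hy]; [lia|auto].
Qed.

Section Specific.
Variable G : graph.
Variables H S : V G -> Prop.
Variable hH : hereditary G H.

Hypothesis hQ : forall v, ~ (breaking G H v /\ ~ S v).

Definition Qg := quotient_graph G H S hH.
Definition qV (x : V Qg) : V G := match x with inl s => proj1_sig s | inr s => proj1_sig s end.
Definition qE (x : Ed Qg) : Ed G := match x with inl s => proj1_sig s | inr s => proj1_sig s end.

Lemma q_src e : src (qE e) = qV (src e).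
Proof. destruct e as [[e h]|[e h]]; reflexivity. Qed.
Lemma q_rng e : rng (qE e) = qV (rng e).
Proof. destruct e as [[e h]|[e h]]; reflexivity. Qed.
Lemma qV_inj x y : qV x = qV y -> x = y.
Proof.
  destruct x as [[x hx]|[x hx]]; [|exfalso; apply (hQ x); auto].
  destruct y as [[y hy]|[y hy]]; [|exfalso; apply (hQ y); auto].
  simpl. intros ->. f_equal. apply sig_eq. auto.
Qed.
Lemma qE_inj x y : qE x = qE y -> x = y.
Proof.
  destruct x as [[x hx]|[x hx]]; [|exfalso; apply (hQ (rng x)); auto].
  destruct y as [[y hy]|[y hy]]; [|exfalso; apply (hQ (rng y)); auto].
  simpl. intros ->. f_equal. apply sig_eq. auto.
Qed.
Lemma q_hI v : ~ H v <-> exists x, qV x = v.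
Proof.
  split.
  - intros h. exists (inl (exist _ v h)). auto.
  - intros ([[x hx]|[x hx]] & <-); simpl; auto. exfalso; apply (hQ x); auto.
Qed.
Lemma q_bwd e : ~ H (rng e) -> exists x, qE x = e.
Proof. intros h. exists (inl (exist _ e h)). auto. Qed.

Lemma Q_AR : all_reflexive Qg <-> BA1 G (fun v => ~ H v) /\ BA2 G (fun v => ~ H v) /\ BA3 G (fun v => ~ H v).
Proof. exact (bwd_AR Qg G qV qE q_src q_rng qV_inj qE_inj _ q_hI q_bwd). Qed.
Lemma Q_NE : (forall c, cycle Qg c -> has_exit Qg c) <-> BNE G (fun v => ~ H v).
Proof. exact (bwd_NE Qg G qV qE q_src q_rng qV_inj qE_inj _ q_hI q_bwd). Qed.

Definition CV := {v : V G | H v}.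
Definition CE := {e : Ed G | H (src e)}.
Definition ccsrc (e : CE) : CV := exist _ (src (proj1_sig e)) (proj2_sig e).
Definition ccrng (e : CE) : CV := exist _ (rng (proj1_sig e)) (hered_edge G H (proj1_sig e) hH (proj2_sig e)).
Definition Core : graph := @Graph CV CE ccsrc ccrng.

Definition iV (x : V Core) : V G := proj1_sig (x : CV).
Definition iE (x : Ed Core) : Ed G := proj1_sig (x : CE).
Lemma i_src e : src (iE e) = iV (src e). Proof. reflexivity. Qed.
Lemma i_rng e : rng (iE e) = iV (rng e). Proof. reflexivity. Qed.
Lemma iV_inj x y : iV x = iV y -> x = y. Proof. apply sig_ext. Qed.
Lemma iE_inj x y : iE x = iE y -> x = y. Proof. apply sig_ext. Qed.
Lemma i_hI v : H v <-> exists x, iV x = v.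
Proof. split. intros h. exists (exist _ v h : CV). auto. intros ([x hx] & <-). auto. Qed.
Lemma i_fwd e : H (src e) -> exists x, iE x = e.
Proof. intros h. exists (exist _ e h : CE). auto. Qed.

Lemma Core_AR : all_reflexive Core <-> FA1 G H /\ FA2 G H /\ FA3 G H.
Proof. exact (fwd_AR Core G iV iE i_src i_rng iV_inj iE_inj _ i_hI i_fwd). Qed.
Lemma Core_NE : (forall c, cycle Core c -> has_exit Core c) <-> FNE G H.
Proof. exact (fwd_NE Core G iV iE i_src i_rng iV_inj iE_inj _ i_hI i_fwd). Qed.

Definition Pg := porcupine_graph G H S hH.
Definition kV (x : V Core) : V Pg := exist _ (inl (proj1_sig (x : CV))) (or_introl (proj2_sig (x : CV))).
Definition kE (x : Ed Core) : Ed Pg := exist _ (inl (proj1_sig (x : CE))) (or_introl (proj2_sig (x : CE))).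
Lemma k_src e : src (kE e) = kV (src e). Proof. apply sig_ext. reflexivity. Qed.
Lemma k_rng e : rng (kE e) = kV (rng e). Proof. apply sig_ext. reflexivity. Qed.
Lemma kV_inj x y : kV x = kV y -> x = y.
Proof. intros h. apply sig_ext. apply (f_equal (@proj1_sig _ _)) in h. simpl in h. congruence. Qed.
Lemma kE_inj x y : kE x = kE y -> x = y.
Proof. intros h. apply sig_ext. apply (f_equal (@proj1_sig _ _)) in h. simpl in h. congruence. Qed.

Definition IP (x : V Pg) : Prop := exists v, proj1_sig (x : PV G H S) = inl v /\ H v.
Lemma k_hI x : IP x <-> exists y, kV y = x.
Proof.
  split.
  - intros (v & hv & h). exists (exist _ v h : CV). apply sig_ext. simpl. auto.
  - intros ([y hy] & <-). exists y. auto.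
Qed.
Lemma psrc_proj (y : Ed Pg) : proj1_sig (src y : PV G H S) = psrc_raw G (proj1_sig (y : PE G H S)).
Proof. reflexivity. Qed.
Lemma prng_proj (y : Ed Pg) : proj1_sig (rng y : PV G H S) = prng_raw G (proj1_sig (y : PE G H S)).
Proof. reflexivity. Qed.

Lemma k_fwd y : IP (src y) -> exists x, kE x = y.
Proof.
  intros (v & hv & h). rewrite psrc_proj in hv.
  destruct y as [[e|p] hy]; simpl in hv; [|discriminate].
  injection hv as <-. exists (exist _ e h : CE). apply sig_ext. reflexivity.
Qed.

Lemma P_Core_AR : all_reflexive Core <-> FA1 Pg IP /\ FA2 Pg IP /\ FA3 Pg IP.
Proof. exact (fwd_AR Core Pg kV kE k_src k_rng kV_inj kE_inj _ k_hI k_fwd). Qed.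
Lemma P_Core_NE : (forall c, cycle Core c -> has_exit Core c) <-> FNE Pg IP.
Proof. exact (fwd_NE Core Pg kV kE k_src k_rng kV_inj kE_inj _ k_hI k_fwd). Qed.

Section SEmpty.
Hypothesis hS0 : forall v, ~ S v.

Lemma P_vert (x : V Pg) : IP x \/ exists p, proj1_sig (x : PV G H S) = inr p.
Proof.
  destruct x as [[v|p] hx]; simpl.
  - left. exists v. split; auto. destruct hx as [h|h]; auto. exfalso; apply (hS0 v h).
  - right. eauto.
Qed.

Lemma P_edge_inr (y : Ed Pg) p : proj1_sig (src y : PV G H S) = inr p -> proj1_sig (y : PE G H S) = inr p.
Proof. rewrite psrc_proj. destruct y as [[e|q] hy]; simpl; congruence. Qed.

Definition rank (x : V Pg) : nat := match proj1_sig (x : PV G H S) with inl _ => 0 | inr p => length p end.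

Lemma P_rank_dec (y : Ed Pg) p : proj1_sig (y : PE G H S) = inr p -> rank (rng y) < length p.
Proof.
  unfold rank. rewrite prng_proj. destruct y as [yy hy]. simpl. intros ->.
  simpl in hy. destruct p as [|e q].
  - exfalso. destruct hy as [(e & q & E & _)|(e & q & E & _)]; discriminate.
  - destruct q as [|f q]; simpl; lia.
Qed.

Lemma P_unique (y y' : Ed Pg) p : proj1_sig (src y : PV G H S) = inr p -> src y' = src y -> y = y'.
Proof.
  intros h1 h2. pose proof (P_edge_inr y p h1) as e1.
  rewrite <- h2 in h1. pose proof (P_edge_inr y' p h1) as e2.
  apply sig_ext. congruence.
Qed.

Lemma P1 c : cycle Pg c -> exists f, In f c /\ IP (src f).
Proof.
  intros hc. apply NNPP. intros hno.
  assert (c <> []) as hne by (apply cycleW in hc; tauto).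
  destruct (list_min (fun e => rank (src e)) c hne) as (e0 & he0 & hmin).
  destruct (P_vert (src e0)) as [hI|(p & hp)]. { apply hno; eauto. }
  pose proof (P_edge_inr e0 p hp) as hy.
  pose proof (P_rank_dec e0 p hy) as hd.
  destruct (cycle_succ _ c e0 hc he0) as (e1 & he1 & hs1).
  specialize (hmin e1 he1). cbv beta in hmin. rewrite hs1 in hmin.
  assert (rank (src e0) = length p) by (unfold rank; rewrite hp; auto). lia.
Qed.

Lemma P2 x : infinite_emitter Pg x -> IP x.
Proof.
  intros hinf. destruct (P_vert x) as [h|(p & hp)]; auto. exfalso. apply hinf.
  destruct (classic (exists y0, src y0 = x)) as [(y0 & hy0)|hno].
  - exists [y0]. intros y hy. left. subst x. eapply P_unique; eauto.
  - exists []. intros y hy. apply hno; eauto.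
Qed.

Lemma P3 a : inf_path Pg a -> exists k, IP (src (a k)).
Proof.
  intros hp. apply NNPP. intros hno.
  assert (forall n, rank (src (a (Datatypes.S n))) < rank (src (a n))) as hdec.
  { intros n. destruct (P_vert (src (a n))) as [h|(p & hpn)]. { exfalso; apply hno; eauto. }
    rewrite <- hp. unfold rank at 2. rewrite hpn. apply (P_rank_dec _ p). apply P_edge_inr; auto. }
  assert (forall n, rank (src (a n)) + n <= rank (src (a 0))) as hb.
  { induction n as [|n IH]; [lia|]. specialize (hdec n). lia. }
  specialize (hb (Datatypes.S (rank (src (a 0))))). lia.
Qed.

Lemma root_mono {Gr : graph} (W W' : V Gr -> Prop) x : (forall y, W y -> W' y) -> root Gr W x -> root Gr W' x.
Proof. intros h (w & hw & hg). exists w. auto. Qed.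

Lemma P_AR : all_reflexive Pg <-> FA1 Pg IP /\ FA2 Pg IP /\ FA3 Pg IP.
Proof.
  split.
  - intros (ha & hb & hc). split; [|split].
    + intros c hc' _. auto.
    + intros v _ hv. auto.
    + intros a hp _. apply hc. auto.
  - intros (ha & hb & hc). split; [|split].
    + intros c hc'. apply ha; auto. apply P1; auto.
    + intros v hv. apply hb; auto. apply P2; auto.
    + intros a hp. destruct (min_exists _ (P3 a hp)) as (k & hk & hmin).
      set (a' := fun n => a (n + k)).
      assert (inf_path Pg a') as hp'.
      { intros n. unfold a'. rewrite hp. f_equal. }
      specialize (hc a' hp' hk).
      apply (fin_sub _ _ hc). intros e ((i & hi) & hr).
      destruct (lt_dec i k) as [hik|hik].
      * exfalso. destruct (P_vert (src (a i))) as [h|(p & hpi)]; [apply (hmin i hik h)|].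
        assert (a i = e) as <- by (eapply P_unique; eauto).
        apply hr. exists (src (a (Datatypes.S i))). split; [exists (Datatypes.S i); auto|]. rewrite hp. left. auto.
      * split.
        -- exists (i - k). unfold a'. rewrite <- hi. f_equal. f_equal. lia.
        -- intros hr'. apply hr. revert hr'. apply root_mono. intros y (n & <-). exists (n + k). auto.
Qed.

Lemma P_NE : (forall c, cycle Pg c -> has_exit Pg c) <-> FNE Pg IP.
Proof.
  split.
  - intros h c hc _. auto.
  - intros h c hc. apply h; auto. apply P1; auto.
Qed.
End SEmpty.

Lemma P_AR_S0 : all_reflexive Pg -> forall v, S v -> (forall v, S v -> breaking G H v) -> False.
Proof.
  intros (ha & hb & hc) v hv hSB.
  destruct (hSB v hv) as (hnH & hinf & _ & hfin).
  set (x := exist _ (inl v) (or_intror hv) : V Pg).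
  assert (infinite_emitter Pg x) as hx.
  { intros hf. apply hinf.
    assert (finite (fun e : Ed G => src e = v /\ H (rng e))) as hf2.
    { apply (fin_rel (fun e (y : Ed Pg) => proj1_sig (y : PE G H S) = inl e) (fun y : Ed Pg => src y = x)); auto.
      - intros a a' b h1 h2. congruence.
      - intros e (hs & hr). exists (exist _ (inl e) (or_intror (conj (eq_ind_r S hv hs) hr)) : PE G H S).
        split; auto. apply sig_ext. simpl. rewrite hs. auto. }
    apply (fin_sub _ _ (fin_union _ _ hfin hf2)). intros e he.
    destruct (classic (H (rng e))); [right|left]; auto. }
  destruct (hb x hx) as (c & hcyc & hon).
  destruct hon as (y0 & hy0 & hs0).
  assert (exists e, proj1_sig (y0 : PE G H S) = inl e /\ src e = v) as (e & he & hse).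
  { pose proof (f_equal (@proj1_sig _ _) hs0) as h. rewrite psrc_proj in h. simpl in h.
    destruct y0 as [[e|p] hy]; simpl in h; [|discriminate]. injection h as h. exists e. split; [reflexivity|exact h]. }
  assert (H (rng e)) as hre.
  { pose proof (proj2_sig (y0 : PE G H S)) as hy. simpl in hy. rewrite he in hy. simpl in hy. destruct hy as [h|(_ & h)]; auto.
    exfalso; apply hnH. rewrite <- hse. auto. }
  assert (forall u w, reach u w -> IP u -> IP w) as hK.
  { intros u w [l hw]. induction hw as [u|u y l w hs hw IH]; auto. intros hu. apply IH.
    destruct hu as (z & hz & hzH). rewrite <- hs in hz. rewrite psrc_proj in hz.
    destruct y as [[e'|p] hy]; simpl in hz; [|discriminate]. injection hz as <-.
    exists (rng e'). split; auto. apply (hered_edge G H e' hH hzH). }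
  destruct (cycle_succ _ c y0 hcyc hy0) as (y1 & hy1 & hs1).
  assert (IP (src y1)) as hI1.
  { rewrite hs1. exists (rng e). split; auto. rewrite prng_proj, he. reflexivity. }
  pose proof (cycle_reach _ c y1 y0 hcyc hy1 hy0) as hr.
  destruct (hK _ _ hr hI1) as (z & hz & hzH). rewrite hs0 in hz. simpl in hz. injection hz as <-.
  auto.
Qed.

End Specific.


Section ELevel.
Variable G : graph.
Variable H : V G -> Prop.
Hypothesis hH : hereditary G H.
Hypothesis hR : forall v, ~ H v -> root G H v -> exists w, reach v w /\ ~ root G H w.
Hypothesis hB : forall v, ~ breaking G H v.

Let nH := fun v : V G => ~ H v.

Lemma nH_back u v : reach u v -> ~ H v -> ~ H u.
Proof. intros hr hv hu. apply hv. eapply hered_reach; eauto. Qed.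

Lemma H_root v : H v -> root G H v.
Proof. intros h. exists v. split; auto. left; auto. Qed.

Lemma not_root_nH v : ~ root G H v -> ~ H v.
Proof. intros h hv. apply h, H_root, hv. Qed.

Section WithBA.
Hypothesis ba1 : BA1 G nH.
Hypothesis ba2 : BA2 G nH.
Hypothesis ba3 : BA3 G nH.

Lemma stay_on_cycle c : cycle G c -> ~ has_exit_in G nH c ->
  forall u l w, walk u l w -> ~ H w -> on_cycle G c u -> on_cycle G c w.
Proof.
  intros hc hno u l w hw. induction hw as [u|u g l v hs hw IH]; auto. intros hnv hon. apply IH; auto.
  assert (~ H (rng g)) as hng by (apply (nH_back _ v); auto; exists l; auto).
  destruct (classic (In g c)) as [hin|hnin].
  - destruct (cycle_succ _ c g hc hin) as (g' & hg' & hs'). exists g'. auto.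
  - exfalso. apply hno. exists g. split; [split; [exact hnin|rewrite hs; exact hon]|exact hng].
Qed.

Lemma lemA c : cycle G c -> (exists f, In f c /\ ~ H (src f)) -> forall e, In e c -> ~ root G H (src e).
Proof.
  intros hc (f & hf & hnf) e he hr.
  assert (~ H (src e)) as hne by (apply (nH_back _ (src f)); auto; eapply cycle_reach; eauto).
  destruct (hR _ hne hr) as (w & [l hw] & hnw).
  assert (~ H w) as hnHw by (apply not_root_nH; auto).
  destruct (ba1 c hc) as [hno|(hx & hext)]. { exists f; auto. }
  - pose proof (stay_on_cycle c hc hno) as key.
    assert (on_cycle G c w) as hon by (apply (key (src e) l); auto; exists e; auto).
    apply hnw. apply (root_reach _ _ _ (src e)); auto.
    apply (on_cycle_reach _ c); auto. exists e; auto.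
  - destruct l as [|g l].
    + apply walk_nil_inv in hw. subst. auto.
    + destruct (hext (src e) (g :: l) w hw) as (w' & hon & hr'); auto.
      * discriminate.
      * exists e; auto.
      * apply hnw. apply (root_reach _ _ _ (src e)); auto.
        apply reach_trans with w'; auto. apply (on_cycle_reach _ c); auto. exists e; auto.
Qed.

Lemma lemA' x l : l <> [] -> walk x l x -> ~ H x -> root G H x -> False.
Proof.
  intros hne hw hnx hrx. destruct (closed_walk_cycle _ l x hne hw) as (c & hc & hinc).
  assert (c <> []) as hcne by (apply cycleW in hc; tauto).
  destruct c as [|e0 c']; [congruence|].
  assert (In e0 l) as he0 by (apply hinc; left; auto).
  destruct (walk_in_reach _ _ _ _ _ hw he0) as (_ & hr1 & _).
  assert (~ H (src e0)) as hn0 by (apply (nH_back _ x); auto).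
  apply (lemA (e0 :: c') hc) with e0; [exists e0; split; [left|]; auto|left; auto|].
  apply (root_reach _ _ _ x); auto.
Qed.

Lemma lemB x : ~ H x -> root G H x -> finite (fun e => src e = x).
Proof.
  intros hnx hrx. apply NNPP. intros hinf.
  destruct (classic (finite (fun e => src e = x /\ ~ H (rng e)))) as [hfin|hnfin].
  - destruct (classic (exists e, src e = x /\ ~ H (rng e))) as [hex|hnex].
    + apply (hB x). repeat split; auto.
    + destruct (hR x hnx hrx) as (w & [l hw] & hnw). destruct l as [|g l].
      * apply walk_nil_inv in hw. subst. auto.
      * apply walk_cons_inv in hw as (hs & hw). apply hnw. apply H_root.
        apply (hered_reach _ H (rng g)); [auto| |exists l; auto].
        apply NNPP. intros hng. apply hnex. eauto.
  - destruct (ba2 x hnx hnfin) as (c & hc & (e & he & hs)).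
    apply (lemA c hc) with e; auto. exists e. split; auto. rewrite hs. auto. rewrite hs. auto.
Qed.

Section LemC.
Variable a : nat -> Ed G.
Hypothesis hp : inf_path G a.
Hypothesis hna : forall n, ~ H (src (a n)).
Hypothesis hall : forall n, root G H (src (a n)).

Definition T y := exists n, reach y (src (a n)).
Lemma T_back y z : reach y z -> T z -> T y.
Proof. intros h (n & hn). exists n. eapply reach_trans; eauto. Qed.
Lemma T_root y : T y -> root G H y.
Proof. intros (n & hn). apply (root_reach _ _ _ _ hn). auto. Qed.
Lemma T_nH y : T y -> ~ H y.
Proof. intros (n & hn). apply (nH_back _ _ hn). auto. Qed.

Definition ExSrc s := T s /\ exists x, src x = s /\ ~ T (rng x) /\ ~ H (rng x).

Lemma Ex_aux w : ~ T w -> ~ H w -> forall t l, walk t l w -> T t -> exists l' s, walk t l' s /\ ExSrc s.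
Proof.
  intros hTw hnHw t l hw. induction hw as [u|u g l v hs hw IH]; intros ht.
  - contradiction.
  - destruct (classic (T (rng g))) as [hT|hnT].
    + destruct (IH hTw hnHw hT) as (l' & s & hw' & hs'). exists (g :: l'), s. split; auto. constructor; auto.
    + exists [], u. split; [constructor|]. split; auto. exists g. repeat split; auto.
      apply (nH_back _ v); auto. exists l; auto.
Qed.

Lemma Ex t : T t -> exists l s, walk t l s /\ ExSrc s.
Proof.
  intros ht. destruct (hR t (T_nH t ht) (T_root t ht)) as (w & [l hw] & hnw).
  eapply (Ex_aux w); eauto.
  - intros h; apply hnw, T_root, h.
  - apply not_root_nH; auto.
Qed.

Lemma Next t : T t -> exists g, src g = t /\ T (rng g).
Proof.
  intros (n & [l hw]). destruct l as [|g l].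
  - apply walk_nil_inv in hw. subst. exists (a n). split; auto. rewrite hp.
    exists (Datatypes.S n). apply reach_refl.
  - apply walk_cons_inv in hw as (hs & hw). exists g. split; auto. exists n. exists l; auto.
Qed.

Definition Chunk t l := l <> [] /\ (exists t', walk t l t' /\ T t') /\ exists e, In e l /\ ExSrc (src e).

Lemma chunk_ex t : T t -> exists l, Chunk t l.
Proof.
  intros ht. destruct (Ex t ht) as (l & s & hw & hs).
  destruct (Next s (proj1 hs)) as (g & hg & hTg).
  exists (l ++ [g]). split; [destruct l; discriminate|]. split.
  - exists (rng g). split; auto. apply walk_app with s; auto. constructor; auto. constructor.
  - exists g. split; [apply in_or_app; right; left; auto|]. rewrite hg. auto.
Qed.

Definition chunkf t : list (Ed G) := epsilon (inhabits []) (Chunk t).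
Lemma chunkf_spec t : T t -> Chunk t (chunkf t).
Proof. intros ht. unfold chunkf. apply epsilon_spec. apply chunk_ex; auto. Qed.

Definition nextst (l : list (Ed G)) : list (Ed G) :=
  match l with [] => [] | e :: r => match r with [] => chunkf (rng e) | _ :: _ => r end end.

Fixpoint st (n : nat) : list (Ed G) :=
  match n with 0 => chunkf (src (a 0)) | Datatypes.S n => nextst (st n) end.

Definition beta (n : nat) : Ed G := hd (a 0) (st n).

Definition Inv n := exists u t', st n <> [] /\ walk u (st n) t' /\ T t'.

Lemma T0 : T (src (a 0)).
Proof. exists 0. apply reach_refl. Qed.

Lemma inv_all n : Inv n.
Proof.
  induction n as [|n IH].
  - destruct (chunkf_spec _ T0) as (hne & (t' & hw & ht) & _). exists (src (a 0)), t'. auto.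
  - destruct IH as (u & t' & hne & hw & ht). unfold Inv. simpl. destruct (st n) as [|e r]; [congruence|].
    apply walk_cons_inv in hw as (hs & hw). simpl. destruct r as [|f r].
    + apply walk_nil_inv in hw. subst t'.
      destruct (chunkf_spec _ ht) as (hne' & (t'' & hw' & ht') & _). exists (rng e), t''. auto.
    + exists (rng e), t'. split; [discriminate|]. auto.
Qed.

Lemma beta_path : inf_path G beta.
Proof.
  intros n. unfold beta. simpl. destruct (inv_all n) as (u & t' & hne & hw & ht).
  destruct (st n) as [|e r]; [congruence|]. simpl. apply walk_cons_inv in hw as (hs & hw).
  destruct r as [|f r].
  - apply walk_nil_inv in hw. subst t'.
    destruct (chunkf_spec _ ht) as (hne' & (t'' & hw' & ht') & _).
    destruct (chunkf (rng e)) as [|g l]; [congruence|]. simpl.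
    apply walk_cons_inv in hw' as (hs' & _). auto.
  - simpl. apply walk_cons_inv in hw as (hs' & _). auto.
Qed.

Lemma beta_T n : T (src (beta n)).
Proof.
  destruct (inv_all n) as (u & t' & hne & hw & ht). unfold beta.
  destruct (st n) as [|e r]; [congruence|]. simpl.
  apply (T_back _ t'); auto. exists (e :: r). pose proof (walk_cons_inv _ _ _ _ _ hw) as [hs _].
  rewrite hs. auto.
Qed.

Lemma beta_distinct i j : src (beta i) = src (beta j) -> i = j.
Proof.
  assert (forall i j, i < j -> src (beta i) = src (beta j) -> False) as key.
  { intros i0 j0 hij he.
    pose proof (inf_path_walk _ beta beta_path (j0 - i0) i0) as hw.
    replace (i0 + (j0 - i0)) with j0 in hw by lia. rewrite <- he in hw.
    apply (lemA' (src (beta i0)) (map beta (seq i0 (j0 - i0)))); auto.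
    - destruct (j0 - i0) eqn:E; [lia|]. simpl. discriminate.
    - apply T_nH, beta_T.
    - apply T_root, beta_T. }
  intros h. destruct (lt_eq_lt_dec i j) as [[hlt|heq]|hgt]; auto.
  - exfalso; eapply key; eauto.
  - exfalso; eapply key; eauto.
Qed.

Lemma skipn_cons_nth (l : list (Ed G)) i : i < length l -> exists x, skipn i l = x :: skipn (Datatypes.S i) l.
Proof.
  revert i. induction l as [|y l IH]; intros i hi; simpl in hi; [lia|].
  destruct i as [|i].
  - exists y. auto.
  - simpl. apply IH. lia.
Qed.

Lemma st_skip m l : st m = l -> forall i, i < length l -> st (m + i) = skipn i l.
Proof.
  intros hm i. induction i as [|i IH]; intros hi.
  - rewrite Nat.add_0_r. auto.
  - rewrite Nat.add_succ_r. change (st (Datatypes.S (m + i))) with (nextst (st (m + i))).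
    rewrite IH by lia.
    destruct (skipn_cons_nth l i) as (x & hx); [lia|]. rewrite hx.
    destruct (skipn_cons_nth l (Datatypes.S i)) as (y & hy); [lia|]. rewrite hy. reflexivity.
Qed.

Definition Fresh m := exists t, T t /\ st m = chunkf t.

Lemma fresh_next m : Fresh m -> exists m', m < m' /\ Fresh m'.
Proof.
  intros (t & ht & hm). destruct (chunkf_spec _ ht) as (hne & (t' & hw & ht') & _).
  destruct (exists_last hne) as (l0 & x & hl).
  assert (st (m + length l0) = [x]) as h1.
  { rewrite (st_skip m (chunkf t) hm). rewrite hl. rewrite skipn_app.
    rewrite skipn_all, Nat.sub_diag. simpl. auto. rewrite hl, length_app. simpl. lia. }
  exists (m + length l0 + 1). split; [lia|]. exists (rng x). split.
  - rewrite hl in hw. rewrite (walk_last _ _ _ _ _ hw). auto.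
  - rewrite Nat.add_1_r. simpl. rewrite h1. auto.
Qed.

Lemma fresh_unb N : exists m, N <= m /\ Fresh m.
Proof.
  induction N as [|N (m & hm & hf)].
  - exists 0. split; auto. exists (src (a 0)). split; auto. apply T0.
  - destruct (le_lt_dec (Datatypes.S N) m) as [h|h]; [exists m; auto|].
    destruct (fresh_next m hf) as (m' & hm' & hf'). exists m'. split; auto. lia.
Qed.

Lemma exsrc_unb N : exists n, N <= n /\ ExSrc (src (beta n)).
Proof.
  destruct (fresh_unb N) as (m & hm & (t & ht & hst)).
  destruct (chunkf_spec _ ht) as (hne & _ & (e & he & hex)).
  destruct (in_split _ _ he) as (l1 & l2 & hl).
  exists (m + length l1). split; [lia|].
  assert (st (m + length l1) = e :: l2) as h.
  { rewrite (st_skip m (chunkf t) hst). rewrite hl. rewrite skipn_app.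
    rewrite skipn_all, Nat.sub_diag. simpl. auto. rewrite hl, length_app. simpl. lia. }
  unfold beta. rewrite h. simpl. auto.
Qed.

Definition gsel (N : nat) : nat := proj1_sig (constructive_indefinite_description _ (exsrc_unb N)).
Lemma gsel_spec N : N <= gsel N /\ ExSrc (src (beta (gsel N))).
Proof. unfold gsel. destruct (constructive_indefinite_description _ (exsrc_unb N)). simpl. auto. Qed.

Fixpoint idx (j : nat) : nat := match j with 0 => gsel 0 | Datatypes.S j => gsel (Datatypes.S (idx j)) end.

Lemma idx_mono j k : j < k -> idx j < idx k.
Proof.
  intros h. induction h as [|k h IH].
  - simpl. pose proof (gsel_spec (Datatypes.S (idx j))). lia.
  - simpl. pose proof (gsel_spec (Datatypes.S (idx k))). lia.
Qed.

Lemma idx_inj j k : idx j = idx k -> j = k.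
Proof.
  intros h. destruct (lt_eq_lt_dec j k) as [[hlt|heq]|hgt]; auto.
  - apply idx_mono in hlt. lia.
  - apply idx_mono in hgt. lia.
Qed.

Lemma idx_ex j : ExSrc (src (beta (idx j))).
Proof. destruct j; simpl; apply gsel_spec. Qed.

Definition xs (s : V G) : Ed G := epsilon (inhabits (a 0)) (fun x => src x = s /\ ~ T (rng x) /\ ~ H (rng x)).
Lemma xs_spec s : ExSrc s -> src (xs s) = s /\ ~ T (rng (xs s)) /\ ~ H (rng (xs s)).
Proof. intros (_ & hex). unfold xs. apply epsilon_spec with (P := fun x => src x = s /\ ~ T (rng x) /\ ~ H (rng x)). auto. Qed.

Lemma lemC_false : False.
Proof.
  set (f := fun j => xs (src (beta (idx j)))).
  apply (fin_pigeon _ f (ba3 beta beta_path (fun n => T_nH _ (beta_T n)))).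
  - intros j k hjk. unfold f in hjk.
    pose proof (xs_spec _ (idx_ex j)) as (h1 & _). pose proof (xs_spec _ (idx_ex k)) as (h2 & _).
    rewrite hjk in h1. rewrite h1 in h2. apply beta_distinct in h2. apply idx_inj; auto.
  - intros j. unfold f. pose proof (xs_spec _ (idx_ex j)) as (h1 & h2 & h3).
    split; [split|]; auto.
    + exists (idx j). auto.
    + intros (y & (n & <-) & hg). apply h2. apply (T_back _ (src (beta n))).
      * apply geq_reach; auto.
      * apply beta_T.
Qed.
End LemC.

Lemma lemC a : inf_path G a -> (forall n, ~ H (src (a n))) -> exists n, ~ root G H (src (a n)).
Proof.
  intros hp hna. apply NNPP. intros hno. apply (lemC_false a hp hna).
  intros n. apply NNPP. intros h. apply hno. eauto.
Qed.

End WithBA.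
End ELevel.


Section Main.
Variable G : graph.
Variable H : V G -> Prop.
Hypothesis hH : hereditary G H.

Lemma ext_noH c : cycle G c -> extreme G c -> (exists f, In f c /\ ~ H (src f)) ->
  forall g, exit G c g -> ~ H (rng g).
Proof.
  intros hc hext (f & hf & hnf) g (hnin & hon) hg.
  apply extremeW in hext as (_ & h).
  destruct (h (src g) [g] (rng g)) as (w & hw & hr); auto.
  - constructor; auto. constructor.
  - discriminate.
  - apply hnf. apply (hered_reach _ H w); auto.
    + apply (hered_reach _ H (rng g)); auto.
    + apply (on_cycle_reach _ c); auto. exists f; auto.
Qed.

Lemma root_edge_H e : H (rng e) -> root G H (src e).
Proof. intros h. exists (rng e). split; auto. apply geq_reach. apply reach_edge. Qed.

Theorem E_to : all_reflexive G ->
  (FA1 G H /\ FA2 G H /\ FA3 G H) /\ (BA1 G (fun v => ~ H v) /\ BA2 G (fun v => ~ H v) /\ BA3 G (fun v => ~ H v)).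
Proof.
  intros (ha & hb & hc). split; [split; [|split]|split; [|split]].
  - intros c hcyc _. exact (ha c hcyc).
  - intros v _ hv. exact (hb v hv).
  - intros a hp _. exact (hc a hp).
  - intros c hcyc hf. destruct (ha c hcyc) as [hno|hext].
    + left. intros (g & hg & _). apply hno. exists g; auto.
    + right. pose proof (ext_noH c hcyc hext hf) as hn.
      apply extremeW in hext as ((g & hg) & hext').
      split.
      * exists g. split; auto.
      * intros u l v hw hne hon _. exact (hext' u l v hw hne hon).
  - intros v _ hv. apply hb. intros hf. apply hv. apply (fin_sub _ _ hf). intros e [he _]. auto.
  - intros a hp _. apply (fin_sub _ _ (hc a hp)). intros e [he _]. auto.
Qed.

Lemma E_noB : all_reflexive G -> forall v, ~ breaking G H v.
Proof.
  intros (ha & hb & hc) v (hnv & hinf & _ & hfin).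
  destruct (hb v hinf) as (c & hcyc & (e & he & hse)).
  assert (exists g, src g = v /\ H (rng g)) as (g & hsg & hgH).
  { apply NNPP. intros hno. apply hinf. apply (fin_sub _ _ hfin). intros g hg. split; auto.
    intros hgH. apply hno. eauto. }
  assert (~ In g c) as hgc.
  { intros hin. destruct (cycle_succ _ c g hcyc hin) as (g' & hg' & hs').
    apply hnv. rewrite <- hse. apply (hered_reach _ H (src g')); auto.
    rewrite hs'; auto. apply (cycle_reach _ c); auto. }
  assert (exit G c g) as hx by (split; auto; exists e; split; congruence).
  destruct (ha c hcyc) as [hno|hext].
  - apply hno. exists g; auto.
  - apply (ext_noH c hcyc hext (ex_intro _ e (conj he (eq_ind_r (fun x => ~ H x) hnv hse))) g hx). auto.
Qed.

Theorem E_NE : all_reflexive G ->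
  ((forall c, cycle G c -> has_exit G c) <-> FNE G H /\ BNE G (fun v => ~ H v)).
Proof.
  intros har. split.
  - intros h. split.
    + intros c hc _. auto.
    + intros c hc hf. destruct (proj1 har c hc) as [hno|hext]; [exfalso; apply hno; auto|].
      destruct (h c hc) as (g & hg). exists g. split; auto. apply (ext_noH c hc hext hf g hg).
  - intros (h1 & h2) c hc. destruct c as [|e0 c'] eqn:E. { apply cycleW in hc. tauto. }
    rewrite <- E in *. destruct (classic (H (src e0))) as [hH0|hH0].
    + apply h1; auto. exists e0. split; auto. rewrite E. left; auto.
    + destruct (h2 c hc) as (g & hg & _). { exists e0. split; auto. rewrite E. left; auto. }
      exists g; auto.
Qed.

Section From.
Hypothesis hR : forall v, ~ H v -> root G H v -> exists w, reach v w /\ ~ root G H w.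
Hypothesis hB : forall v, ~ breaking G H v.

Theorem E_from : (FA1 G H /\ FA2 G H /\ FA3 G H) ->
  (BA1 G (fun v => ~ H v) /\ BA2 G (fun v => ~ H v) /\ BA3 G (fun v => ~ H v)) -> all_reflexive G.
Proof.
  intros (fa1 & fa2 & fa3) (ba1 & ba2 & ba3). split; [|split].
  - intros c hc. destruct c as [|e0 c'] eqn:E. { apply cycleW in hc. tauto. }
    rewrite <- E in *. destruct (classic (H (src e0))) as [hH0|hH0].
    + apply fa1; auto. exists e0. split; auto. rewrite E. left; auto.
    + assert (exists f, In f c /\ ~ H (src f)) as hf by (exists e0; split; auto; rewrite E; left; auto).
      pose proof (lemA G H hH hR ba1 c hc hf) as hA.
      assert (forall g, exit G c g -> ~ H (rng g)) as hx.
      { intros g (_ & (e & he & hs)) hg. apply (hA e he). rewrite hs. apply root_edge_H; auto. }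
      destruct (ba1 c hc hf) as [hno|(hxi & hext)].
      * left. intros (g & hg). apply hno. exists g. split; auto.
      * right. apply extremeW. split.
        -- destruct hxi as (g & hg & _). exists g; auto.
        -- intros u l v hw hne hon. apply (hext u l v hw hne hon).
           intros hv. destruct hon as (e & he & hs). apply (hA e he). rewrite hs.
           exists v. split; auto. apply geq_reach. exists l; auto.
  - intros v hinf. destruct (classic (H v)) as [hv|hv]; [apply fa2; auto|].
    destruct (classic (finite (fun e => src e = v /\ ~ H (rng e)))) as [hfin|hnfin]; [|apply ba2; auto].
    exfalso. destruct (classic (exists e, src e = v /\ ~ H (rng e))) as [hex|hnex].
    + apply (hB v). repeat split; auto.
    + assert (exists g, src g = v) as (g & hg).
      { apply NNPP. intros hno. apply hinf. exists []. intros e he. apply hno. eauto. }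
      assert (H (rng g)) as hgH by (apply NNPP; intros h; apply hnex; eauto).
      apply hinf. apply (lemB G H hH hR hB ba1 ba2 v hv). rewrite <- hg. apply root_edge_H; auto.
  - intros a hp. destruct (classic (exists n, H (src (a n)))) as [hex|hno].
    + destruct (min_exists _ hex) as (k & hk & hmin).
      set (a' := fun n => a (n + k)).
      assert (inf_path G a') as hp' by (intros n; unfold a'; rewrite hp; f_equal).
      pose proof (fa3 a' hp' hk) as hfin.
      assert (finite (fun e => exists i, In i (seq 0 k) /\ src e = src (a i))) as hpre.
      { apply fin_bigunion. intros i hi. apply in_seq in hi.
        apply (lemB G H hH hR hB ba1 ba2).
        - apply hmin. lia.
        - apply (root_reach _ _ _ (src (a k))). apply inf_path_reach; auto. lia. apply H_root; auto. }
      apply (fin_sub _ _ (fin_union _ _ hfin hpre)). intros e ((i & hi) & hr).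
      destruct (lt_dec i k) as [hik|hik].
      * right. exists i. split; [apply in_seq; lia|auto].
      * left. split.
        -- exists (i - k). unfold a'. rewrite <- hi. f_equal. f_equal. lia.
        -- intros (y & (n & <-) & hg). apply hr. exists (src (a (n + k))). split; [exists (n + k); auto|auto].
    + assert (forall n, ~ H (src (a n))) as hna by (intros n h; apply hno; eauto).
      destruct (lemC G H hH hR ba1 ba3 a hp hna) as (N & hN).
      pose proof (ba3 a hp hna) as hfin.
      assert (finite (fun e => exists i, In i (seq 0 N) /\ (src e = src (a i) /\ H (rng e)))) as hpre.
      { apply fin_bigunion. intros i hi.
        destruct (classic (root G H (src (a i)))) as [hr|hnr].
        - apply (fin_sub _ _ (lemB G H hH hR hB ba1 ba2 (src (a i)) (hna i) hr)). intros e [he _]. auto.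
        - exists []. intros e (he & hH'). apply hnr. rewrite <- he. apply root_edge_H; auto. }
      apply (fin_sub _ _ (fin_union _ _ hfin hpre)). intros e ((i & hi) & hr).
      destruct (classic (H (rng e))) as [hre|hre].
      * right. exists i. split; [|split; auto].
        apply in_seq. split; [lia|]. simpl. destruct (lt_dec i N) as [h|h]; auto. exfalso.
        apply hN. apply (root_reach _ _ _ (src (a i))). apply inf_path_reach; auto. lia.
        rewrite hi. apply root_edge_H; auto.
      * left. split; auto. split; auto. exists i; auto.
Qed.
End From.
End Main.


Lemma breaking_ext (G : graph) (H H' : V G -> Prop) v : (forall x, H x <-> H' x) -> breaking G H v -> breaking G H' v.
Proof.
  intros hiff (h1 & h2 & (e & he1 & he2) & h4). split; [|split; [|split]].
  - rewrite <- hiff. auto.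
  - auto.
  - exists e. rewrite <- hiff. auto.
  - apply (fin_sub _ _ h4). intros x (hx1 & hx2). rewrite hiff. auto.
Qed.

Lemma breaking_perp (G : graph) (H : V G -> Prop) v : breaking G H v -> breaking G (perpH G H) v -> False.
Proof.
  intros (_ & hinf & _ & hf1) (_ & _ & _ & hf2). apply hinf.
  apply (fin_sub _ _ (fin_union _ _ hf1 hf2)). intros e he.
  destruct (classic (H (rng e))) as [h|h]; [right|left]; auto.
  split; auto. unfold perpH. intros hn. apply hn. exists (rng e). split; auto. left; auto.
Qed.

Theorem proposition3p17 (G : graph) (H S : V G -> Prop)
  (hadm : admissible G H S) (hrefl : reflexive G H S) :
  (all_reflexive G <->
     all_reflexive (quotient_graph G H S (admissible_hereditary G H S hadm)) /\
     all_reflexive (porcupine_graph G H S (admissible_hereditary G H S hadm))) /\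
  (strongly_all_reflexive G <->
     strongly_all_reflexive (quotient_graph G H S (admissible_hereditary G H S hadm)) /\
     strongly_all_reflexive (porcupine_graph G H S (admissible_hereditary G H S hadm))).
Proof.
  set (hH := admissible_hereditary G H S hadm).
  destruct hrefl as (hrH & hrS).
  assert (hSB : forall v, S v -> breaking G H v) by (intros v hv; exact (proj2 (proj2 hadm) v hv)).
  assert (hBS : forall v, breaking G H v -> S v).
  { intros v hb. apply hrS. split.
    - apply (breaking_ext G H); auto.
    - intros (hb' & _). apply (breaking_perp G H v hb hb'). }
  assert (hQ : forall v, ~ (breaking G H v /\ ~ S v)) by (intros v (h1 & h2); auto).
  assert (hR : forall v, ~ H v -> root G H v -> exists w, reach v w /\ ~ root G H w).
  { intros v hv _. rewrite hrH in hv. unfold perpH at 1 in hv. apply NNPP in hv.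
    destruct hv as (w & hw & hg). exists w. split; auto. apply geq_reach; auto. }
  assert (AR_eq : all_reflexive G <-> all_reflexive (Qg G H S hH) /\ all_reflexive (Pg G H S hH)).
  { split.
    - intros har. pose proof (E_noB G H hH har) as hB.
      assert (hS0 : forall v, ~ S v) by (intros v hv; apply (hB v); auto).
      destruct (E_to G H hH har) as (hF & hBA). split.
      + apply (Q_AR G H S hH hQ); auto.
      + apply (P_AR G H S hH hS0). apply (P_Core_AR G H S hH). apply (Core_AR G H hH). auto.
    - intros (hq & hp).
      assert (hS0 : forall v, ~ S v) by (intros v hv; apply (P_AR_S0 G H S hH hp v hv hSB)).
      assert (hB : forall v, ~ breaking G H v) by (intros v hb; apply (hS0 v); auto).
      apply (E_from G H hH hR hB).
      + apply (Core_AR G H hH). apply (P_Core_AR G H S hH). apply (P_AR G H S hH hS0). auto.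
      + apply (Q_AR G H S hH hQ). auto. }
  split; [exact AR_eq|].
  unfold strongly_all_reflexive. split.
  - intros (har & hne). pose proof (proj1 AR_eq har) as (hq & hp). split; split; auto.
    + pose proof (E_noB G H hH har) as hB.
      apply (Q_NE G H S hH hQ). apply (E_NE G H hH har). auto.
    + pose proof (E_noB G H hH har) as hB.
      assert (hS0 : forall v, ~ S v) by (intros v hv; apply (hB v); auto).
      apply (P_NE G H S hH hS0). apply (P_Core_NE G H S hH). apply (Core_NE G H hH). apply (E_NE G H hH har). auto.
  - intros ((hq & hqne) & (hp & hpne)). pose proof (proj2 AR_eq (conj hq hp)) as har. split; auto.
    assert (hS0 : forall v, ~ S v) by (intros v hv; apply (P_AR_S0 G H S hH hp v hv hSB)).
    apply (E_NE G H hH har). split.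
    + apply (Core_NE G H hH). apply (P_Core_NE G H S hH). apply (P_NE G H S hH hS0). auto.
    + apply (Q_NE G H S hH hQ). auto.
Qed.
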